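(* For every integer $m\ge 1$, every $0\le s\le m$ and every fixed $\lambda_1,\dots,\lambda_m$, the function $G_s(m,\{\lambda_j\}|\{\xi_k\})$ is symmetric under all permutations of the variables $\xi_1,\xi_2,\dots,\xi_m$.
   Context: Fix a real parameter $\zeta\in(0,\pi)$. For integers $m\ge1$ and $0\le s\le m$ set $\epsilon_j=-\tfrac12$ for $1\le j\le s$ and $\epsilon_j=+\tfrac12$ for $s<j\le m$; $\epsilon_j$ is attached to the variable $\lambda_j$. For complex variables $\lambda_1,\dots,\lambda_m,\xi_1,\dots,\xi_m$ define $$G_s(m,\{\lambda_j\}|\{\xi_k\})=\frac{1}{s!(m-s)!}\sum_{\sigma\in S_m}(-1)^{[\sigma]}\prod_{1\le k<j\le m}\frac{\sinh(\lambda_{\sigma(j)}-\xi_k+i\epsilon_{\sigma(j)}\zeta)\,\sinh(\lambda_{\sigma(k)}-\xi_j-i\epsilon_{\sigma(k)}\zeta)}{\sinh(\lambda_{\sigma(j)}-\lambda_{\sigma(k)}+i(\epsilon_{\sigma(j)}+\epsilon_{\sigma(k)})\zeta)},$$ where the sum is over all permutations $\sigma$ of $\{1,\dots,m\}$ and $(-1)^{[\sigma]}$ is the sign of $\sigma$ (an identity of meromorphic functions). *)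

(* Defs.v *)
From HB Require Import structures.
From mathcomp Require Import all_boot all_order all_fingroup all_algebra.
From mathcomp Require Import reals.
From mathcomp.analysis Require Import sequences exp trigo.
From mathcomp.real_closed Require Import complex.
Set Implicit Arguments. Unset Strict Implicit. Unset Printing Implicit Defensive.
Import Order.TTheory GRing.Theory Num.Theory.
Local Open Scope ring_scope.
Local Open Scope complex_scope.

Definition cexp (R : realType) (z : R[i]) : R[i] :=
  let: Complex x y := z in (expR x * cos y) +i* (expR x * sin y).

Definition csinh (R : realType) (z : R[i]) : R[i] :=
  (cexp z - cexp (- z)) / 2%:R.

(* epsilon_j attached to lambda_j, with 0-based index j : 'I_m
   (paper's index j+1): -1/2 if j+1 <= s, +1/2 otherwise. *)
Definition eps {R : realType} (m s : nat) (j : 'I_m) : R :=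
  if (j < s)%N then - (1 / 2%:R) else 1 / 2%:R.
Arguments eps {R} m s j.

Definition iR (R : realType) (x : R) : R[i] := 0 +i* x.

Definition G (R : realType) (zeta : R) (m s : nat)
    (lam xi : 'I_m -> R[i]) : R[i] :=
  ((s`! * (m - s)`!)%:R)^-1 *
  \sum_(sigma : 'S_m)
    (-1) ^+ (odd_perm sigma) *
    \prod_(j < m) \prod_(k < m | (k < j)%N)
      (csinh (lam (sigma j) - xi k + iR (eps m s (sigma j) * zeta)) *
       csinh (lam (sigma k) - xi j - iR (eps m s (sigma k) * zeta)) /
       csinh (lam (sigma j) - lam (sigma k)
              + iR ((eps m s (sigma j) + eps m s (sigma k)) * zeta))).
Arguments G {R} zeta m s lam xi.

(* Main.v *)
Require Import Defs.
From HB Require Import structures.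
From mathcomp Require Import all_boot all_order all_fingroup all_algebra.
From mathcomp Require Import reals ring zify.
From mathcomp.analysis Require Import sequences exp trigo.
From mathcomp.real_closed Require Import complex.
Import Order.TTheory GRing.Theory Num.Theory.
Local Open Scope ring_scope.
Local Open Scope complex_scope.

From Stdlib Require Import FunctionalExtensionality.

Lemma alg (F : fieldType) (CA CB CH fqa gpb fqb gpa fpa gqb fpb gqa hqp hpq S : F) :
  hqp != 0 -> hpq != 0 -> fqa*gpb - fqb*gpa = hqp*S -> fpa*gqb - fpb*gqa = hpq*S ->
  CA*fqa*(CB*gpb)/(CH*hqp) + CA*fpb*(CB*gqa)/(CH*hpq) =
  CA*fpa*(CB*gqb)/(CH*hpq) + CA*fqb*(CB*gpa)/(CH*hqp).
Proof.
move=> hqp0 hpq0 e1 e2.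
apply/eqP; rewrite -subr_eq0 !invfM; apply/eqP.
transitivity (CA * CB * CH^-1 * ((fqa * gpb - fqb * gpa) * hqp^-1
     - (fpa * gqb - fpb * gqa) * hpq^-1)).
  move: (CH^-1) (hqp^-1) (hpq^-1) => x1 x2 x3; ring.
by rewrite e1 e2 ![_ * S]mulrC !mulfK // subrr mulr0.
Qed.

Section S.
Variable R : realType.

Lemma cexpD (z w : R[i]) : cexp (z + w) = cexp z * cexp w.
Proof.
case: z => x y; case: w => x' y'.
rewrite /cexp /= expRD cosD sinD; congr (_ +i* _); ring.
Qed.

Lemma cexp0 : cexp (0 : R[i]) = 1.
Proof. by rewrite /cexp /= expR0 cos0 sin0 !mulr1 mulr0. Qed.

Lemma cexp_neq0 (z : R[i]) : cexp z != 0.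
Proof.
have h : cexp z * cexp (- z) = 1 by rewrite -cexpD subrr cexp0.
by apply/eqP=> e; move: h; rewrite e mul0r; apply/eqP; rewrite eq_sym oner_eq0.
Qed.

Lemma cexpN (z : R[i]) : cexp (- z) = (cexp z)^-1.
Proof.
have h : cexp z * cexp (- z) = 1 by rewrite -cexpD subrr cexp0.
by apply: (mulfI (cexp_neq0 z)); rewrite h mulfV // cexp_neq0.
Qed.

Lemma csinhB (x a : R[i]) :
  csinh (x - a) = (cexp x / cexp a - cexp a / cexp x) / 2%:R.
Proof. by rewrite /csinh cexpD cexpN opprB cexpD cexpN. Qed.

Lemma sinh_id (x y a b : R[i]) :
  csinh (x - a) * csinh (y - b) - csinh (x - b) * csinh (y - a) =
  csinh (x - y) * csinh (a - b).
Proof.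
rewrite !csinhB.
have := cexp_neq0 x; have := cexp_neq0 y; have := cexp_neq0 a; have := cexp_neq0 b.
move=> ? ? ? ?.
field; by rewrite !cexp_neq0.
Qed.

Lemma iRD (x y : R) : iR (x + y) = iR x + iR y.
Proof. by apply/eqP; rewrite /iR eq_complex /= add0r !eqxx. Qed.

Variables (zeta : R) (m s : nat) (lam : 'I_m -> R[i]).

Definition uu p := lam p + iR (eps m s p * zeta).
Definition vv p := lam p - iR (eps m s p * zeta).
Definition ff p (x : R[i]) := csinh (lam p - x + iR (eps m s p * zeta)).
Definition gg p (y : R[i]) := csinh (lam p - y - iR (eps m s p * zeta)).
Definition hh p q := csinh (lam p - lam q + iR ((eps m s p + eps m s q) * zeta)).

Lemma ffE p x : ff p x = csinh (uu p - x).
Proof. by rewrite /ff /uu; congr csinh; ring. Qed.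
Lemma ggE p x : gg p x = csinh (vv p - x).
Proof. by rewrite /gg /vv; congr csinh; ring. Qed.
Lemma hhE p q : hh p q = csinh (uu p - vv q).
Proof. by rewrite /hh /uu /vv mulrDl iRD; congr csinh; ring. Qed.

Lemma key p q a b : ff q a * gg p b - ff q b * gg p a = hh q p * csinh (a - b).
Proof. by rewrite !ffE !ggE hhE sinh_id. Qed.

Definition Tm (sigma : 'S_m) (xi : 'I_m -> R[i]) :=
  \prod_(j < m) \prod_(k < m | (k < j)%N)
      (csinh (lam (sigma j) - xi k + iR (eps m s (sigma j) * zeta)) *
       csinh (lam (sigma k) - xi j - iR (eps m s (sigma k) * zeta)) /
       csinh (lam (sigma j) - lam (sigma k)
              + iR ((eps m s (sigma j) + eps m s (sigma k)) * zeta))).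

Lemma GE xi : G zeta m s lam xi =
  ((s`! * (m - s)`!)%:R)^-1 * \sum_(sigma : 'S_m) (-1) ^+ (odd_perm sigma) * Tm sigma xi.
Proof. by []. Qed.

Definition Q (F : 'I_m -> 'I_m -> R[i]) :=
  \prod_(p : 'I_m * 'I_m | (p.2 < p.1)%N) F p.1 p.2.

Lemma TmQ sigma xi : Tm sigma xi =
  Q (fun j k => ff (sigma j) (xi k)) * Q (fun j k => gg (sigma k) (xi j))
  / Q (fun j k => hh (sigma j) (sigma k)).
Proof.
rewrite /Tm pair_big_dep /Q -prodfV -!big_split /=.
by apply: eq_bigr.
Qed.

Section Adj.
Variables (i i' : 'I_m).
Hypothesis Hi : val i' = i.+1.
Let t := tperm i i'.

Lemma ii' : (i != i').
Proof. rewrite -(inj_eq val_inj) /= Hi. by rewrite neq_ltn ltnSn. Qed.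

Definition Pd (p : 'I_m * 'I_m) := (p.2 < p.1)%N && ~~ ((p.1 == i') && (p.2 == i)).
Definition Q' (F : 'I_m -> 'I_m -> R[i]) := \prod_(p | Pd p) F p.1 p.2.

Lemma QQ' F : Q F = Q' F * F i' i.
Proof.
rewrite /Q (bigD1 (i', i)) /=; last by rewrite Hi.
rewrite mulrC; congr (_ * _).
Qed.

Lemma Pd_l a b : Pd (t a, b) = Pd (a, b).
Proof.
rewrite /Pd /t /=; case: tpermP => [->|->|/eqP na /eqP nb]; rewrite ?eqxx ?(negbTE ii') ?(negbTE nb) //=.
all: rewrite -?(inj_eq val_inj) /= Hi; apply/idP/idP; lia.
Qed.

Lemma Pd_r a b : Pd (a, t b) = Pd (a, b).
Proof.
rewrite /Pd /t /=; case: tpermP => [->|->|/eqP na /eqP nb]; rewrite ?eqxx ?(negbTE na) //=.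
all: rewrite -?(inj_eq val_inj) /= Hi; apply/idP/idP; lia.
Qed.


Lemma Q'_eq F G : (forall j k, G j k = F j k) -> Q' G = Q' F.
Proof. by move=> e; apply: eq_bigr => p _; rewrite e. Qed.

Lemma Q'_l F G : (forall j k, G j k = F (t j) k) -> Q' G = Q' F.
Proof.
move=> e; rewrite /Q'.
have inj : injective (fun p : 'I_m * 'I_m => (t p.1, p.2)).
  by apply: (can_inj (g := fun p : 'I_m * 'I_m => (t p.1, p.2))) => -[a b] /=; rewrite tpermK.
rewrite [RHS](reindex_inj inj) /=; apply: eq_big => -[a b] /=; first by rewrite Pd_l.
by rewrite e.
Qed.

Lemma Q'_r F G : (forall j k, G j k = F j (t k)) -> Q' G = Q' F.
Proof.
move=> e; rewrite /Q'.
have inj : injective (fun p : 'I_m * 'I_m => (p.1, t p.2)).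
  by apply: (can_inj (g := fun p : 'I_m * 'I_m => (p.1, t p.2))) => -[a b] /=; rewrite tpermK.
rewrite [RHS](reindex_inj inj) /=; apply: eq_big => -[a b] /=; first by rewrite Pd_r.
by rewrite e.
Qed.

Lemma Q'_lr F G : (forall j k, G j k = F (t j) (t k)) -> Q' G = Q' F.
Proof.
move=> e; rewrite (@Q'_l (fun j k => F j (t k))) //.
by apply: Q'_r.
Qed.

Hypothesis Hden : forall a b : 'I_m, a != b ->
     csinh (lam a - lam b + iR ((eps m s a + eps m s b) * zeta)) != 0.

Section Sig.
Variables (sigma : 'S_m) (xi : 'I_m -> R[i]).
Let xit := fun k => xi (t k).
Let p := sigma i.
Let q := sigma i'.
Let a := xi i.
Let b := xi i'.
Let CA := Q' (fun j k => ff (sigma j) (xi k)).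
Let CB := Q' (fun j k => gg (sigma k) (xi j)).
Let CH := Q' (fun j k => hh (sigma j) (sigma k)).

Lemma T1 : Tm sigma xi = CA * ff q a * (CB * gg p b) / (CH * hh q p).
Proof. by rewrite TmQ !QQ'. Qed.

Lemma T2 : Tm (t * sigma)%g xit = CA * ff p b * (CB * gg q a) / (CH * hh p q).
Proof.
rewrite TmQ !QQ' /xit !permM tpermL tpermR.
rewrite (@Q'_lr (fun j k => ff (sigma j) (xi k)) (fun j k => ff ((t * sigma)%g j) (xi (t k)))); last by move=> j k; rewrite permM.
rewrite (@Q'_lr (fun j k => gg (sigma k) (xi j)) (fun j k => gg ((t * sigma)%g k) (xi (t j)))); last by move=> j k; rewrite permM.
rewrite (@Q'_lr (fun j k => hh (sigma j) (sigma k)) (fun j k => hh ((t * sigma)%g j) ((t * sigma)%g k))); last by move=> j k; rewrite !permM.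
by [].
Qed.

Lemma T3 : Tm (t * sigma)%g xi = CA * ff p a * (CB * gg q b) / (CH * hh p q).
Proof.
rewrite TmQ !QQ' !permM tpermL tpermR.
rewrite (@Q'_l (fun j k => ff (sigma j) (xi k)) (fun j k => ff ((t * sigma)%g j) (xi k))); last by move=> j k; rewrite permM.
rewrite (@Q'_r (fun j k => gg (sigma k) (xi j)) (fun j k => gg ((t * sigma)%g k) (xi j))); last by move=> j k; rewrite permM.
rewrite (@Q'_lr (fun j k => hh (sigma j) (sigma k)) (fun j k => hh ((t * sigma)%g j) ((t * sigma)%g k))); last by move=> j k; rewrite !permM.
by [].
Qed.

Lemma T4 : Tm sigma xit = CA * ff q b * (CB * gg p a) / (CH * hh q p).
Proof.
rewrite TmQ !QQ' /xit tpermL tpermR.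
rewrite (@Q'_r (fun j k => ff (sigma j) (xi k)) (fun j k => ff (sigma j) (xi (t k)))); last by [].
rewrite (@Q'_l (fun j k => gg (sigma k) (xi j)) (fun j k => gg (sigma k) (xi (t j)))); last by [].
by [].
Qed.


Lemma pq : p != q.
Proof. by rewrite /p /q (inj_eq perm_inj) ii'. Qed.

Lemma Tsum : Tm sigma xi + Tm (t * sigma)%g xit = Tm (t * sigma)%g xi + Tm sigma xit.
Proof.
rewrite T1 T2 T3 T4.
have hqp : hh q p != 0 by apply: Hden; rewrite eq_sym pq.
have hpq : hh p q != 0 by apply: Hden; rewrite pq.
have e1 := key p q a b; have e2 := key q p a b.
have H := @alg R[i] CA CB CH _ _ _ _ _ _ _ _ _ _ _ hqp hpq e1 e2. exact: H.
Qed.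

End Sig.

Lemma hsign (sigma : 'S_m) : (-1) ^+ odd_perm (t * sigma)%g = - (-1) ^+ odd_perm sigma :> R[i].
Proof. by rewrite odd_mul_tperm ii' signr_addb expr1 mulN1r. Qed.

Lemma h1 (xi : 'I_m -> R[i]) :
  \sum_(sigma : 'S_m) (-1) ^+ odd_perm sigma * Tm (t * sigma)%g xi =
  - \sum_(sigma : 'S_m) (-1) ^+ odd_perm sigma * Tm sigma xi.
Proof.
rewrite [in RHS](reindex_inj (mulgI t)) /= -sumrN; apply: eq_bigr => sigma _.
by rewrite hsign mulNr opprK.
Qed.

Lemma Gadj (xi : 'I_m -> R[i]) : G zeta m s lam (fun k => xi (t k)) = G zeta m s lam xi.
Proof.
rewrite !GE; congr (_ * _).
have hs : \sum_(sigma : 'S_m) (-1) ^+ odd_perm sigma * Tm sigma xi +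
   \sum_(sigma : 'S_m) (-1) ^+ odd_perm sigma * Tm (t * sigma)%g (fun k => xi (t k)) =
   \sum_(sigma : 'S_m) (-1) ^+ odd_perm sigma * Tm (t * sigma)%g xi +
   \sum_(sigma : 'S_m) (-1) ^+ odd_perm sigma * Tm sigma (fun k => xi (t k)).
  by rewrite -!big_split; apply: eq_bigr => sigma _ /=; rewrite -!mulrDr Tsum.
move: hs; rewrite !h1.
move: (\sum_(sigma : 'S_m) _ * Tm sigma xi) (\sum_(sigma : 'S_m) _ * Tm sigma (fun k => xi (t k))) => S1 S2 hs.
have e : (S1 - S2) * 2%:R = (S1 + - S2) - (- S1 + S2) by ring.
rewrite hs subrr in e.
move/eqP: e; rewrite mulf_eq0 pnatr_eq0 orbF addrC subr_eq0 => /eqP ->.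
by [].
Qed.

End Adj.
End S.

Definition Inv (R : realType) (zeta : R) (m s : nat) (lam : 'I_m -> R[i]) (tau : 'S_m) :=
  forall xi : 'I_m -> R[i], G zeta m s lam (fun k => xi (tau k)) = G zeta m s lam xi.
Arguments Inv {R} zeta m s lam tau.

Section Gen.
Variables (R : realType) (zeta : R) (m s : nat) (lam : 'I_m -> R[i]).
Hypothesis Hden : forall a b : 'I_m, a != b ->
     csinh (lam a - lam b + iR ((eps m s a + eps m s b) * zeta)) != 0.

Lemma Inv1 : Inv zeta m s lam 1.
Proof.
move=> xi; congr G; apply: functional_extensionality => k; by rewrite perm1.
Qed.

Lemma InvM a b : Inv zeta m s lam a -> Inv zeta m s lam b -> Inv zeta m s lam (a * b)%g.
Proof.
move=> ha hb xi.
have -> : (fun k => xi ((a * b)%g k)) = (fun k => (fun k => xi (b k)) (a k)).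
  by apply: functional_extensionality => k; rewrite permM.
by rewrite (ha (fun k => xi (b k))) hb.
Qed.

Lemma Inv_adj (x y : 'I_m) : (y = x.+1 :> nat) -> Inv zeta m s lam (tperm x y).
Proof. by move=> e xi; apply: (@Gadj R zeta m s lam x y e Hden). Qed.

Lemma Inv_lt n : forall x y : 'I_m, (y = x + n.+1 :> nat)%N -> Inv zeta m s lam (tperm x y).
Proof.
elim: n => [|n IH] x y e.
  by apply: Inv_adj; rewrite e addn1.
have hy : (y < m)%N := ltn_ord y.
have ly' : (x + n.+1 < m)%N by lia.
pose y' := Ordinal ly'.
have h1 : Inv zeta m s lam (tperm x y') by apply: IH.
have h2 : Inv zeta m s lam (tperm y' y) by apply: Inv_adj => /=; rewrite e; lia.
have n1 : y' != x by rewrite -(inj_eq val_inj) /=; apply/eqP; lia.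
have n2 : y != x by rewrite -(inj_eq val_inj) /= e; apply/eqP; lia.
have -> : tperm x y = ((tperm x y') ^ (tperm y' y))%g.
  by rewrite tpermJ tpermD // tpermL.
rewrite conjgE tpermV.
by apply: InvM => //; apply: InvM.
Qed.

Lemma Inv_tperm (x y : 'I_m) : Inv zeta m s lam (tperm x y).
Proof.
case: (ltngtP x y) => h.
- by apply: (@Inv_lt (y - x).-1); lia.
- by rewrite tpermC; apply: (@Inv_lt (x - y).-1); lia.
- have -> : x = y by apply: val_inj.
  by rewrite tperm1; apply: Inv1.
Qed.

Lemma Inv_all tau : Inv zeta m s lam tau.
Proof.
case: (prod_tpermP tau) => ts -> _.
elim: ts => [|[x y] ts IH]; first by rewrite big_nil; apply: Inv1.
by rewrite big_cons; apply: InvM => //; apply: Inv_tperm.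
Qed.
End Gen.

Theorem lemma3p1 (R : realType) (zeta : R) (m s : nat)
    (lam : 'I_m -> R[i]) :
  0 < zeta < pi ->
  (1 <= m)%N -> (s <= m)%N ->
  (* G is defined (as a meromorphic function of xi) exactly when no
     denominator vanishes; the denominators depend only on lambda *)
  (forall a b : 'I_m, a != b ->
     csinh (lam a - lam b + iR ((eps m s a + eps m s b) * zeta)) != 0) ->
  forall (tau : 'S_m) (xi : 'I_m -> R[i]),
    G zeta m s lam (fun k => xi (tau k)) = G zeta m s lam xi.
Proof.
move=> _ _ _ Hden tau xi.
exact: (@Inv_all R zeta m s lam Hden tau xi).
Qed.
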